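(* Let $\beta$ be any partition, with conjugate $\beta' = (\beta'_1,\beta'_2,\dots)$, and let $k \geq \beta'_1$ (that is, $k$ is at least the number of parts of $\beta$). Let $\lambda = (k, \beta'_1, \beta'_2, \dots)$, a partition of $k+|\beta|$. Then $$s_\beta(1,q,\dots,q^{k-1}) = q^{-\binom{|\beta|+1}{2}} f_{\lambda,|\beta|}(q),$$ i.e. the principal specialization $s_\beta(1,q,\dots,q^{k-1})$ is, up to a power of $q$, the distribution of the major index over all standard Young tableaux of shape $\lambda$ having the maximum possible number $|\beta|$ of descents.
   Context: For a partition $\lambda\vdash N$, a standard Young tableau of shape $\lambda$ is a filling of the Ferrers diagram with $1,\dots,N$, increasing along rows and down columns; it has a descent at $m$ if $m+1$ lies in a strictly lower row than $m$; $\mathrm{des}$ is the number of descents and $\mathrm{maj}$ their sum. $f_{\lambda,i}(q)=\sum q^{\mathrm{maj}(\tau)}$ over standard Young tableaux of shape $\lambda$ with $\mathrm{des}(\tau)=i$. The conjugate $\beta'$ has $\beta'_c$ equal to the number of parts of $\beta$ that are $\ge c$. $s_\beta(x_1,\dots,x_m)$ is the Schur polynomial, the sum of $x^T$ over semistandard Young tableaux $T$ of shape $\beta$ with entries in $\{1,\dots,m\}$. *)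

(* Defs.v *)
From HB Require Import structures.
From mathcomp Require Import all_boot all_order all_algebra.
Set Implicit Arguments. Unset Strict Implicit. Unset Printing Implicit Defensive.
Import GRing.Theory.
Local Open Scope ring_scope.

Definition is_partition (l : seq nat) : bool :=
  sorted geq l && all (fun p => 0 < p)%N l.

Definition conj_part (b : seq nat) : seq nat :=
  [seq count (fun p => c <= p)%N b | c <- iota 1 (head 0%N b)].

(* Cells of the Ferrers diagram of l: (row, column), 0-based. *)
Definition cells (l : seq nat) : predArgType :=
  {c : 'I_(size l) * 'I_(head 0%N l) | (c.2 < nth 0%N l c.1)%N}.

Definition crow (l : seq nat) (c : cells l) : nat := (val c).1.
Definition ccol (l : seq nat) (c : cells l) : nat := (val c).2.

(* Standard Young tableau of shape l, entries 0..N-1 standing for 1..N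
   (N = |l|): an injective filling of the cells (hence a bijection onto
   {1..N} since #cells = N), increasing along rows and down columns. *)
Definition is_syt (l : seq nat) (T : {ffun cells l -> 'I_(sumn l)}) : bool :=
  injectiveb T &&
  [forall c, forall d,
     ((crow c == crow d) && (ccol c < ccol d)%N ==> (T c < T d)%N) &&
     ((ccol c == ccol d) && (crow c < crow d)%N ==> (T c < T d)%N)].

(* Entry v (i.e. the number v+1) is a descent: v+2 lies in a strictly lower row
   than v+1. The descent is then at m = v+1. *)
Definition is_descent (l : seq nat) (T : {ffun cells l -> 'I_(sumn l)}) (v : nat) : bool :=
  [exists c, exists d,
     [&& nat_of_ord (T c) == v, nat_of_ord (T d) == v.+1 & (crow c < crow d)%N]].

Definition des (l : seq nat) (T : {ffun cells l -> 'I_(sumn l)}) : nat :=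
  #|[pred v : 'I_(sumn l) | is_descent T v]|.

Definition maj (l : seq nat) (T : {ffun cells l -> 'I_(sumn l)}) : nat :=
  (\sum_(v < sumn l | is_descent T v) v.+1)%N.

Definition f_poly (l : seq nat) (i : nat) : {poly int} :=
  \sum_(T : {ffun cells l -> 'I_(sumn l)} | is_syt T && (des T == i)) 'X^(maj T).

(* Semistandard Young tableau of shape b with entries in {1..m}
   (entry j : 'I_m stands for j+1): rows weakly increase, columns strictly. *)
Definition is_ssyt (b : seq nat) (m : nat) (T : {ffun cells b -> 'I_m}) : bool :=
  [forall c, forall d,
     ((crow c == crow d) && (ccol c < ccol d)%N ==> (T c <= T d)%N) &&
     ((ccol c == ccol d) && (crow c < crow d)%N ==> (T c < T d)%N)].

(* Schur polynomial s_b(x_1,..,x_m) evaluated at x_{j+1} = x j. *)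
Definition schur_eval (R : comNzRingType) (b : seq nat) (m : nat) (x : 'I_m -> R) : R :=
  \sum_(T : {ffun cells b -> 'I_m} | is_ssyt T) \prod_(c : cells b) x (T c).

(* Main.v *)
Require Import Defs.
From HB Require Import structures.
From mathcomp Require Import all_boot all_order all_algebra.
From mathcomp Require Import zify.
Set Implicit Arguments. Unset Strict Implicit. Unset Printing Implicit Defensive.
Import GRing.Theory.
Lemma geq_tr : transitive geq.
Proof. by move=> y x z /= h1 h2; exact: leq_trans h2 h1. Qed.

Lemma nth_le_head (s : seq nat) i : sorted geq s -> nth 0 s i <= head 0 s.
Proof.
case: s => [|a s] //=; first by rewrite nth_nil.
move=> Hp; have Ha := order_path_min geq_tr Hp.
case: i => [|i] //=.
case: (ltnP i (size s)) => Hi; last by rewrite nth_default.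
by move/all_nthP: Ha => /(_ 0 i Hi).
Qed.

Lemma count_sorted (s : seq nat) i j : sorted geq s ->
  (j < count (fun p => i < p) s) = (i < nth 0 s j).
Proof.
elim: s j => [|a s IH] j /=; first by rewrite nth_nil.
move=> Hp; have Hs := path_sorted Hp.
case: (ltnP i a) => Hia /=.
  case: j => [|j] //=; by rewrite add1n ltnS IH.
have Hc : count (fun p => i < p) s = 0.
  apply/eqP; rewrite -leqn0 leqNgt -has_count; apply/hasPn => x Hx.
  have := order_path_min geq_tr Hp.
  move/allP/(_ x Hx) => /= Hxa; rewrite -leqNgt; exact: leq_trans Hxa Hia.
rewrite Hc add0n ltn0; apply/esym/negbTE; rewrite -leqNgt.
have := @nth_le_head (a :: s) j Hp; rewrite /= => H; exact: leq_trans H Hia.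
Qed.

Lemma size_conj b : size (conj_part b) = head 0 b.
Proof. by rewrite /conj_part size_map size_iota. Qed.

Lemma nth_conj b i : sorted geq b ->
  nth 0 (conj_part b) i = count (fun p => i < p) b.
Proof.
move=> Hs; case: (ltnP i (head 0 b)) => Hi.
  by rewrite /conj_part (nth_map 0) ?size_iota // nth_iota.
rewrite nth_default ?size_conj //.
apply/esym/eqP; rewrite -leqn0 leqNgt (count_sorted i 0 Hs) -leqNgt.
by case: b Hs Hi => [|a b] //=.
Qed.

Lemma card_cells (l : seq nat) : (forall r, nth 0 l r <= head 0 l) -> #|cells l| = sumn l.
Proof.
move=> H; rewrite card_sig -sum1_card.
rewrite (eq_bigl (fun c : 'I_(size l) * 'I_(head 0 l) => (c.2 < nth 0 l c.1))) //.
rewrite -(pair_big_dep xpredT (fun (i : 'I_(size l)) (j : 'I_(head 0 l)) => j < nth 0 l i) (fun _ _ => 1)) /=.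
rewrite sumnE (big_nth 0) big_mkord; apply: eq_bigr => i _.
rewrite (eq_bigl (fun j : 'I_(head 0 l) => true && (j < nth 0 l i))) // (big_ord_narrow_cond (H i)) /= sum1_card card_ord //.
Qed.

Definition mkcell (l : seq nat) r c (Hr : r < size l) (Hc : c < head 0 l)
  (H : c < nth 0 l r) : cells l :=
  @exist _ (fun c : 'I_(size l) * 'I_(head 0 l) => c.2 < nth 0 l c.1)
    (Ordinal Hr, Ordinal Hc) H.

Lemma crow_mk l r c Hr Hc H : crow (@mkcell l r c Hr Hc H) = r. Proof. by []. Qed.
Lemma ccol_mk l r c Hr Hc H : ccol (@mkcell l r c Hr Hc H) = c. Proof. by []. Qed.

Lemma cell_eq l (x y : cells l) : crow x = crow y -> ccol x = ccol y -> x = y.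
Proof.
case: x y => [[a b] Hx] [[a' b'] Hy]; rewrite /crow /ccol /= => E1 E2.
apply: val_inj => /=; congr pair; exact: val_inj.
Qed.

Lemma cell_prop l (x : cells l) : ccol x < nth 0 l (crow x).
Proof. exact: (valP x). Qed.
Lemma crow_lt l (x : cells l) : crow x < size l.
Proof. exact: ltn_ord. Qed.
Lemma ccol_lt l (x : cells l) : ccol x < head 0 l.
Proof. exact: ltn_ord. Qed.

Lemma card_ltn h m : m <= h -> #|[pred j : 'I_h | j < m]| = m.
Proof.
move=> H; rewrite -sum1_card.
rewrite (eq_bigl (fun j : 'I_h => true && (j < m))) // (big_ord_narrow_cond H) /=.
by rewrite sum1_card card_ord.
Qed.

Definition kenc (M a b : nat) := a * M + b.

Lemma kencL M a b a' b' : a < a' -> b < M -> kenc M a b < kenc M a' b'.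
Proof. rewrite /kenc => h1 h2; nia. Qed.
Lemma kencR M a b a' b' : a <= a' -> b < b' -> kenc M a b < kenc M a' b'.
Proof. rewrite /kenc => h1 h2; nia. Qed.
Lemma kenc_inv M a b a' b' : b < M -> b' < M -> kenc M a b < kenc M a' b' ->
  (a < a') \/ (a = a' /\ b < b').
Proof.
move=> h1 h2 h3; case: (ltngtP a a') => E; [by left| |by right; subst; split=>//; rewrite /kenc ltn_add2l in h3].
by have := kencL b E h2; rewrite ltnNge (ltnW h3).
Qed.
Lemma kenc_inj M a b a' b' : b < M -> b' < M -> kenc M a b = kenc M a' b' ->
  a = a' /\ b = b'.
Proof.
move=> h1 h2 E; case: (ltngtP a a') => E2.
- by have := kencL b' E2 h1; rewrite E ltnn.
- by have := kencL b E2 h2; rewrite E ltnn.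
- by subst; split=>//; move: E; rewrite /kenc => /addnI.
Qed.

Lemma inj_surj (X : finType) m (f : X -> 'I_m) : injective f -> #|X| = m ->
  forall v, exists x, f x = v.
Proof.
move=> Hi Hc v.
have E : f @: setT = setT.
  apply/eqP; by rewrite eqEcard subsetT card_imset // !cardsT Hc card_ord leqnn.
have : v \in f @: setT by rewrite E inE.
by case/imsetP=> x _ ->; exists x.
Qed.

Lemma inj_card_lt (X : finType) m (f : X -> 'I_m) (v : nat) : injective f -> #|X| = m ->
  v <= m -> #|[pred x | f x < v]| = v.
Proof.
move=> Hi Hc Hv.
have -> : #|[pred x | f x < v]| = #|f @: [set x | f x < v]|.
  by rewrite card_imset // cardsE.
have -> : f @: [set x | f x < v] = [set w : 'I_m | w < v].
  apply/setP=> w; rewrite inE; apply/imsetP/idP.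
    by case=> x; rewrite inE => H ->.
  by move=> H; have [x Hx] := inj_surj Hi Hc w; exists x => //; rewrite inE Hx.
by rewrite cardsE card_ltn.
Qed.

Lemma card_sumb (X : finType) (P : pred X) : #|P| = \sum_(x : X) (P x : nat).
Proof. by rewrite -sum1_card big_mkcond; apply: eq_bigr => x _; rewrite unfold_in; case: (P x). Qed.

Lemma sum_rank (X : finType) (f : X -> nat) : injective f -> forall A : {set X},
  \sum_(x in A) #|[set y in A | f y < f x]| = 'C(#|A|, 2).
Proof.
move=> Hf A; move Hm : #|A| => m; elim: m A Hm => [|m IH] A Hm.
  by move/eqP: Hm; rewrite cards_eq0 => /eqP ->; rewrite big_set0.
have [a0 Ha0] : exists a0, a0 \in A by apply/set0Pn; rewrite -card_gt0 Hm.
case: (arg_maxnP f Ha0) => a Ha0a Hmax0; have Ha : a \in A := Ha0a.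
have Hmax : forall y, y \in A -> f y <= f a := Hmax0.
have HA' : #|A :\ a| = m by have := cardsD1 a A; rewrite Hm Ha add1n => -[].
rewrite (bigD1 a) //=.
have -> : [set y in A | f y < f a] = A :\ a.
  apply/setP => y; rewrite !inE; apply/idP/idP.
    by case/andP => -> H; rewrite andbT; apply: contraTneq H => ->; rewrite ltnn.
  case/andP => H1 H2; rewrite H2 /= ltn_neqAle Hmax // andbT.
  by apply: contra H1 => /eqP /Hf ->.
rewrite HA' binS bin1 -(IH _ HA') addnC; congr addn.
apply: eq_big => [x|x]; first by rewrite !inE andbC.
move=> /andP [Hx Hxa]; apply: eq_card => y; rewrite !inE.
case: (y =P a) => [->|_] //=.
by rewrite ltnNge Hmax ?andbF.
Qed.

Lemma kenc_j0 M j a b : b < M -> 0 < b -> (kenc M j 0 < kenc M a b) = (j <= a).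
Proof.
move=> H1 H2; apply/idP/idP; last by move=> H; apply: kencR.
apply: contraTT; rewrite -!ltnNge => H; apply: ltnW; exact: kencL.
Qed.
Lemma kenc_j0' M j a b : b < M -> 0 < b -> (kenc M j 0 <= kenc M a b) = (j <= a).
Proof.
move=> H1 H2; rewrite leq_eqVlt kenc_j0 //; case: eqP => // E.
by case: (kenc_inj (leq_ltn_trans (leq0n _) H1) H1 E) => _ E2; move: H2; rewrite -E2.
Qed.

Section Main.
Variable beta : seq nat.
Variable k' : nat.
Hypothesis Hpart : is_partition beta.
Hypothesis Hk : nth 0 (conj_part beta) 0 <= k'.+1.

Local Notation k := k'.+1.
Local Notation cb := (conj_part beta).
Local Notation lam := (k :: conj_part beta).
Local Notation N := (sumn (k :: conj_part beta)).
Local Notation n := (sumn beta).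
Local Notation CL := (cells (k :: conj_part beta)).
Local Notation CB := (cells beta).
Local Notation M := (size (k :: conj_part beta)).

Lemma Hsort : sorted geq beta.
Proof. by case/andP: Hpart. Qed.
Lemma Hpos : all (fun p => 0 < p) beta.
Proof. by case/andP: Hpart. Qed.

Lemma nth_pos r : r < size beta -> 0 < nth 0 beta r.
Proof. by move=> H; move/all_nthP: Hpos => /(_ 0 r H). Qed.

Lemma size_beta : size beta <= k.
Proof.
apply: leq_trans Hk; rewrite nth_conj ?Hsort //.
by rewrite (eq_in_count (a2 := predT)) ?count_predT // => x Hx; move/allP: Hpos => /(_ x Hx).
Qed.

Lemma nth_lamS i : nth 0 lam i.+1 = count (fun p => i < p) beta.
Proof. by rewrite /= nth_conj ?Hsort. Qed.

Lemma lam_le r : nth 0 lam r <= head 0 lam.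
Proof.
case: r => [|i] //=; rewrite nth_conj ?Hsort //; apply: leq_trans Hk.
rewrite nth_conj ?Hsort //; apply: sub_count => p /=; exact: leq_ltn_trans.
Qed.

Lemma card_CL : #|CL| = N.
Proof. exact: card_cells lam_le. Qed.
Lemma card_CB : #|CB| = n.
Proof. apply: card_cells => r; exact: nth_le_head Hsort. Qed.

Lemma fr_p1 : 0 < size lam. Proof. by []. Qed.
Definition fr (j : 'I_k) : CL := @mkcell lam 0 j fr_p1 (ltn_ord j) (ltn_ord j).

Lemma crow_fr j : crow (fr j) = 0. Proof. by []. Qed.
Lemma ccol_fr j : ccol (fr j) = j. Proof. by []. Qed.
Lemma fr_inj : injective fr.
Proof. by move=> j j' E; apply: val_inj; have := congr1 (@ccol _) E. Qed.

Lemma trB_p1 (x : CB) : (ccol x).+1 < size lam.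
Proof. by rewrite /= ltnS size_conj; exact: ccol_lt. Qed.
Lemma trB_p2 (x : CB) : crow x < head 0 lam.
Proof. exact: leq_trans (crow_lt x) size_beta. Qed.
Lemma trB_p3 (x : CB) : crow x < nth 0 lam (ccol x).+1.
Proof. by rewrite nth_lamS count_sorted ?Hsort // cell_prop. Qed.
Definition trB (x : CB) : CL := mkcell (trB_p1 x) (trB_p2 x) (trB_p3 x).

Lemma crow_trB x : crow (trB x) = (ccol x).+1. Proof. by []. Qed.
Lemma ccol_trB x : ccol (trB x) = crow x. Proof. by []. Qed.
Lemma trB_inj : injective trB.
Proof.
move=> x y E; apply: cell_eq.
  by rewrite -(ccol_trB x) E.
by apply/eq_add_S; rewrite -!crow_trB E.
Qed.

Lemma cell_cases (c : CL) : (exists j, c = fr j) \/ (exists x, c = trB x).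
Proof.
case E: (crow c) => [|i].
  left; exists (Ordinal (ccol_lt c)); apply: cell_eq => //.
right.
have H1 : ccol c < size beta.
  apply: leq_trans (count_size (fun p => i < p) beta).
  by rewrite -nth_lamS -E cell_prop.
have H2 : i < head 0 beta.
  by have := crow_lt c; rewrite E /= ltnS size_conj.
have H3 : i < nth 0 beta (ccol c).
  by rewrite -count_sorted ?Hsort // -nth_lamS -E cell_prop.
by exists (mkcell H1 H2 H3); apply: cell_eq => //.
Qed.

Lemma fr_trB j x : fr j <> trB x.
Proof. by move=> E; have := crow_fr j; rewrite E crow_trB. Qed.

Lemma sum_CL (F : CL -> nat) :
  \sum_(c : CL) F c = \sum_(j : 'I_k) F (fr j) + \sum_(x : CB) F (trB x).
Proof.
rewrite (bigID (fun c : CL => crow c == 0)) /=; congr addn.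
  rewrite -(big_imset _ (in2W fr_inj)) /=; apply: eq_bigl => c.
  apply/idP/imsetP.
    move=> /eqP E; case: (cell_cases c) => [[j ->]|[x Ex]]; first by exists j.
    by move: E; rewrite Ex crow_trB.
  by case=> j _ ->.
rewrite -(big_imset _ (in2W trB_inj)) /=; apply: eq_bigl => c.
apply/idP/imsetP.
  move=> E; case: (cell_cases c) => [[j Ej]|[x ->]]; last by exists x.
  by rewrite Ej crow_fr in E.
by case=> x _ ->; rewrite crow_trB.
Qed.

Lemma card_CL_pred (P : pred CL) :
  #|P| = #|[pred j : 'I_k | P (fr j)]| + #|[pred x : CB | P (trB x)]|.
Proof. by rewrite !card_sumb sum_CL. Qed.

Lemma card_NF : #|[pred c : CL | crow c != 0]| = n.
Proof.
rewrite card_CL_pred /= -card_CB.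
by rewrite card0 add0n.
Qed.

Section SYT.
Variable S : {ffun CL -> 'I_N}.

Lemma syt_inj : is_syt S -> injective S.
Proof. by case/andP => /injectiveP. Qed.
Lemma syt_row : is_syt S -> forall c d, crow c = crow d -> ccol c < ccol d -> S c < S d.
Proof.
case/andP => _ /forallP H c d E1 E2.
by move/forallP: (H c) => /(_ d) /andP [/implyP H1 _]; apply: H1; rewrite E1 eqxx E2.
Qed.
Lemma syt_col : is_syt S -> forall c d, ccol c = ccol d -> crow c < crow d -> S c < S d.
Proof.
case/andP => _ /forallP H c d E1 E2.
by move/forallP: (H c) => /(_ d) /andP [_ /implyP H1]; apply: H1; rewrite E1 eqxx E2.
Qed.

Definition predo (v : 'I_N) : 'I_N := Ordinal (leq_ltn_trans (leq_pred v) (ltn_ord v)).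

Lemma descent_lift : is_syt S -> des S = n ->
  forall d, crow d != 0 -> exists c, (S c).+1 = S d /\ crow c < crow d.
Proof.
move=> Hs Hd.
pose E := [set d : CL | (crow d != 0) && [exists c, ((S c).+1 == S d) && (crow c < crow d)]].
pose NF := [set d : CL | crow d != 0].
have sub1 : E \subset NF by apply/subsetP => d; rewrite !inE => /andP[].
have cNF : #|NF| = n by rewrite cardsE card_NF.
have sub2 : [set v : 'I_N | is_descent S v] \subset [set predo (S d) | d in E].
  apply/subsetP => v; rewrite inE => /existsP [c /existsP [d /and3P [/eqP Hc /eqP Hd' Hr]]].
  apply/imsetP; exists d.
    rewrite inE -lt0n (leq_trans _ Hr) //=; apply/existsP; exists c.
    by rewrite Hc Hd' eqxx.
  by apply: val_inj; rewrite /= Hd'.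
have cD : #|[set v : 'I_N | is_descent S v]| = n by rewrite cardsE.
have cE : n <= #|E|.
  rewrite -cD; apply: leq_trans (subset_leq_card sub2) _; exact: leq_imset_card.
have EE : E = NF.
  by apply/eqP; rewrite eqEcard sub1 cNF.
move=> d Hd0; have : d \in E by rewrite EE inE.
rewrite inE => /andP [_ /existsP [c /andP [/eqP H1 H2]]]; by exists c.
Qed.

Definition cnt (c : CL) := #|[pred j : 'I_k | S (fr j) <= S c]|.

Lemma cnt_mono c d : S c <= S d -> cnt c <= cnt d.
Proof.
move=> H; apply: subset_leq_card; apply/subsetP => j; rewrite !inE => H2.
exact: leq_trans H2 H.
Qed.

Lemma cnt_le c : cnt c <= k.
Proof. by rewrite -[X in _ <= X](card_ord k) max_card. Qed.

Lemma cnt_fr : is_syt S -> forall j, cnt (fr j) = j.+1.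
Proof.
move=> Hs j; rewrite /cnt -(card_ltn (ltn_ord j)); apply: eq_card => j' /=.
rewrite !inE ltnS; case: (ltngtP j' j) => E.
- by rewrite ltnW // syt_row.
- by rewrite leqNgt syt_row.
- by rewrite (val_inj E) leqnn.
Qed.

Lemma fr0_le : is_syt S -> forall c, S (fr ord0) <= S c.
Proof.
move=> Hs c; case: (cell_cases c) => [[j ->]|[x ->]].
  case: (posnP j) => E; first by rewrite (val_inj (E : val j = val (@ord0 k'))).
  by rewrite ltnW // syt_row.
have H1 : S (fr ord0) <= S (fr (Ordinal (trB_p2 x))).
  case: (posnP (crow x)) => E.
    by apply: eq_leq; congr (nat_of_ord (S _)); apply: cell_eq.
  by rewrite ltnW // syt_row.
apply: leq_trans H1 _; rewrite ltnW // syt_col //.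
Qed.

Lemma cnt_pos : is_syt S -> forall c, 0 < cnt c.
Proof.
move=> Hs c; apply/card_gt0P; exists ord0; rewrite inE.
exact: fr0_le.
Qed.

End SYT.

Section Good.
Variable S : {ffun CL -> 'I_N}.
Hypothesis Hs : is_syt S.
Hypothesis Hd : des S = n.

Local Notation key c := (kenc M (cnt S c) (crow c)).

Lemma key_mono : forall c d, S c < S d -> key c < key d.
Proof.
have main : forall m d, S d = m :> nat -> forall c, S c < m -> key c < key d.
  elim/ltn_ind => m IH d Edm c Hc.
  case: (cell_cases d) => [[j Ej]|[x Ex]].
    apply: kencL; last exact: crow_lt.
    rewrite /cnt; apply: proper_card; apply/properP; split.
      apply/subsetP => j'; rewrite !inE => H; apply: leq_trans H _.
      by rewrite Edm ltnW.
    by exists j; rewrite !inE -?Ej Edm ?leqnn // -ltnNge.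
  have Hd0 : crow d != 0 by rewrite Ex crow_trB.
  have [e [He1 He2]] := descent_lift Hs Hd Hd0.
  have Hed : key e < key d by apply: kencR => //; apply: cnt_mono; rewrite -He1.
  case: (ltngtP (S c) (S e)) => Hce.
  - apply: ltn_trans Hed; apply: (IH (S e)) => //; by rewrite -Edm -He1.
  - by move: Hc; rewrite -Edm -He1 ltnS leqNgt Hce.
  - by rewrite (syt_inj Hs (val_inj Hce)).
by move=> c d; apply: main.
Qed.

End Good.

Definition phi (S : {ffun CL -> 'I_N}) : {ffun CB -> 'I_k} :=
  [ffun x => inord (cnt S (trB x)).-1].

Lemma phi_val S x : phi S x = (cnt S (trB x)).-1 :> nat.
Proof.
rewrite ffunE inordK //; have := cnt_le S (trB x); rewrite ltnS; case: (cnt S _) => //.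
Qed.

Definition Tn (T : {ffun CB -> 'I_k}) r cc : nat :=
  \sum_(x : CB | (crow x == r) && (ccol x == cc)) T x.

Lemma Tn_cell T x : Tn T (crow x) (ccol x) = T x.
Proof.
rewrite /Tn (big_pred1 x) // => y /=.
Qed.

Definition keyT (T : {ffun CB -> 'I_k}) (c : CL) : nat :=
  if crow c == 0 then kenc M (ccol c) 0
  else kenc M (Tn T (ccol c) (crow c).-1) (crow c).

Lemma keyT_fr T j : keyT T (fr j) = kenc M j 0.
Proof. by []. Qed.
Lemma keyT_trB T x : keyT T (trB x) = kenc M (T x) (ccol x).+1.
Proof. by rewrite /keyT crow_trB /= ccol_trB Tn_cell. Qed.

Definition rank (T : {ffun CB -> 'I_k}) (c : CL) := #|[pred d | keyT T d < keyT T c]|.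

Lemma rank_lt T c : rank T c < N.
Proof.
rewrite -card_CL.
have H : [pred d | keyT T d < keyT T c] \subset (predC1 c).
  by apply/subsetP => d; rewrite !inE; apply: contraTneq => ->; rewrite ltnn.
apply: leq_ltn_trans (subset_leq_card H) _; rewrite cardC1.
have : 0 < #|CL| by apply/card_gt0P; exists c.
by case: #|CL|.
Qed.

Definition psi (T : {ffun CB -> 'I_k}) : {ffun CL -> 'I_N} :=
  [ffun c => Ordinal (rank_lt T c)].

Lemma psi_val T c : psi T c = rank T c :> nat.
Proof. by rewrite ffunE. Qed.

Lemma rank_lt_key T c d : keyT T c < keyT T d -> rank T c < rank T d.
Proof.
move=> H; apply: proper_card; apply/properP; split.
  by apply/subsetP => e; rewrite !inE => He; apply: ltn_trans He H.
by exists c; rewrite !inE ?ltnn.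
Qed.

Lemma rank_le_key T c d : keyT T c <= keyT T d -> rank T c <= rank T d.
Proof.
move=> H; apply: subset_leq_card; apply/subsetP => e; rewrite !inE => He.
exact: leq_trans He H.
Qed.

Lemma predn_le a b : a <= b -> a.-1 <= b.-1.
Proof. by move=> h; rewrite -!subn1 leq_sub2r. Qed.
Lemma predn_lt a b : 0 < a -> a < b -> a.-1 < b.-1.
Proof. by case: a => // a _; case: b. Qed.

Section Good2.
Variable S : {ffun CL -> 'I_N}.
Hypothesis Hs : is_syt S.
Hypothesis Hd : des S = n.

Lemma keyphi c : keyT (phi S) c = kenc M (cnt S c).-1 (crow c).
Proof.
case: (cell_cases c) => [[j ->]|[x ->]].
  by rewrite keyT_fr cnt_fr.
by rewrite keyT_trB phi_val crow_trB.
Qed.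

Lemma keyphi_mono c d : S c < S d -> keyT (phi S) c < keyT (phi S) d.
Proof.
move=> H; rewrite !keyphi.
have := key_mono Hs Hd H.
case/(kenc_inv (crow_lt c) (crow_lt d)).
  move=> H2; apply: kencL; last exact: crow_lt.
  by apply: predn_lt => //; exact: cnt_pos.
by case=> E1 E2; rewrite E1; apply: kencR.
Qed.

Lemma psiphi : psi (phi S) = S.
Proof.
apply/ffunP => c; apply: val_inj; rewrite /= psi_val /rank.
rewrite -(inj_card_lt (syt_inj Hs) card_CL (ltnW (ltn_ord (S c)))).
apply: eq_card => d; rewrite !inE; apply/idP/idP; last exact: keyphi_mono.
move=> H; case: (ltngtP (S d) (S c)) => // E.
  by have := keyphi_mono E; rewrite ltnNge (ltnW H).
by move: H; rewrite (syt_inj Hs (val_inj E)) ltnn.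
Qed.

Lemma phi_ssyt : is_ssyt (phi S).
Proof.
apply/forallP => x; apply/forallP => y; apply/andP; split; apply/implyP => /andP [/eqP E1 E2].
  rewrite !phi_val; apply: predn_le; apply: cnt_mono; rewrite ltnW //.
  by apply: syt_col => //; rewrite !ccol_trB.
rewrite !phi_val; apply: predn_lt; first exact: cnt_pos.
have H : S (trB x) < S (trB y) by apply: syt_row => //; rewrite !crow_trB E1.
have := key_mono Hs Hd H; case/(kenc_inv (crow_lt _) (crow_lt _)).
  by [].
by rewrite !crow_trB E1 ltnn; case.
Qed.

End Good2.

Section SSYT.
Variable T : {ffun CB -> 'I_k}.
Hypothesis Ht : is_ssyt T.

Lemma ssyt_row x y : crow x = crow y -> ccol x < ccol y -> T x <= T y.
Proof.
move=> E1 E2; move/forallP: Ht => /(_ x) /forallP /(_ y) /andP [/implyP H _].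
by apply: H; rewrite E1 eqxx E2.
Qed.
Lemma ssyt_col x y : ccol x = ccol y -> crow x < crow y -> T x < T y.
Proof.
move=> E1 E2; move/forallP: Ht => /(_ x) /forallP /(_ y) /andP [_ /implyP H].
by apply: H; rewrite E1 eqxx E2.
Qed.

Lemma T_ge x : crow x <= T x.
Proof.
have [r Ex] : exists r, crow x = r by eexists.
rewrite Ex; elim: r x Ex => [|r IH] x Ex //.
have H0 : 0 < head 0 beta by apply: leq_ltn_trans (leq0n _) (ccol_lt x).
have H1 : 0 < nth 0 beta (crow x) by apply: leq_ltn_trans (leq0n _) (cell_prop x).
pose x0 := mkcell (crow_lt x) H0 H1.
have Hx0 : T x0 <= T x.
  case: (posnP (ccol x)) => E.
    by apply: eq_leq; congr (nat_of_ord (T _)); apply: cell_eq.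
  by apply: ssyt_row.
have Hr : r < size beta by have := crow_lt x; rewrite Ex => /ltnW.
pose y := mkcell Hr H0 (nth_pos Hr).
have Hy : T y < T x0 by apply: ssyt_col => //; rewrite /y /x0 !crow_mk Ex.
have := IH y erefl; move=> H; apply: leq_trans Hx0; exact: leq_ltn_trans H Hy.
Qed.

Lemma M_pos : 0 < M. Proof. by []. Qed.

Lemma keyT_inj : injective (keyT T).
Proof.
move=> c d.
case: (cell_cases c) => [[j ->]|[x ->]]; case: (cell_cases d) => [[j' ->]|[y ->]];
  rewrite ?keyT_fr ?keyT_trB.
- by case/(kenc_inj M_pos M_pos) => /val_inj ->.
- by case/(kenc_inj M_pos (crow_lt (trB y))).
- by case/(kenc_inj (crow_lt (trB x)) M_pos).
- case/(kenc_inj (crow_lt (trB x)) (crow_lt (trB y))) => /val_inj E1 [E2].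
  case: (ltngtP (crow x) (crow y)) => E3.
  + by have := ssyt_col E2 E3; rewrite E1 ltnn.
  + by have := ssyt_col (esym E2) E3; rewrite E1 ltnn.
  + by congr trB; apply: cell_eq.
Qed.

Lemma rank_inj : injective (rank T).
Proof.
move=> c d E; case: (ltngtP (keyT T c) (keyT T d)) => H.
- by have := rank_lt_key H; rewrite E ltnn.
- by have := rank_lt_key H; rewrite E ltnn.
- exact: keyT_inj.
Qed.

Lemma rank_ltE c d : (rank T c < rank T d) = (keyT T c < keyT T d).
Proof.
apply/idP/idP; last exact: rank_lt_key.
move=> H; case: (ltngtP (keyT T c) (keyT T d)) => // H2.
  by have := rank_lt_key H2; rewrite ltnNge (ltnW H).
by move: H; rewrite (keyT_inj H2) ltnn.
Qed.

Lemma psi_inj : injective (psi T).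
Proof. by move=> c d /(congr1 val); rewrite /= !psi_val; apply: rank_inj. Qed.

Lemma psi_ltE c d : (psi T c < psi T d) = (keyT T c < keyT T d).
Proof. by rewrite !psi_val rank_ltE. Qed.

Lemma psi_syt : is_syt (psi T).
Proof.
apply/andP; split; first by apply/injectiveP; exact: psi_inj.
apply/forallP => c; apply/forallP => d; rewrite !psi_ltE.
case: (cell_cases c) => [[j ->]|[x ->]]; case: (cell_cases d) => [[j' ->]|[y ->]];
  rewrite ?keyT_fr ?keyT_trB ?crow_fr ?crow_trB ?ccol_fr ?ccol_trB /=.
- apply/andP; split; apply/implyP => H; first by apply: kencL.
  by move: H; rewrite ltnn andbF.
- apply/implyP => /andP [/eqP E _]; apply: kencR => //; rewrite E; exact: T_ge.
- by rewrite ltn0 andbF.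
- apply/andP; split; apply/implyP => /andP [/eqP E H].
    apply: kencL; last exact: (crow_lt (trB x)).
    by apply: ssyt_col => //; exact: eq_add_S E.
  by apply: kencR => //; apply: ssyt_row.
Qed.

End SSYT.

Section SSYT2.
Variable T : {ffun CB -> 'I_k}.
Hypothesis Ht : is_ssyt T.
Local Notation R := (psi T).

Lemma trB_row_lt (x : CB) : (ccol x).+1 < M.
Proof. exact: (crow_lt (trB x)). Qed.

Lemma fr_trB_key (j : 'I_k) (x : CB) : (keyT T (fr j) < keyT T (trB x)) = (j <= T x).
Proof. by rewrite keyT_fr keyT_trB kenc_j0 // trB_row_lt. Qed.

Lemma phipsi : phi R = T.
Proof.
apply/ffunP => x; apply: val_inj; rewrite /= phi_val /cnt.
rewrite (eq_card (B := [pred j : 'I_k | j < (T x).+1])) ?card_ltn //.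
move=> j; rewrite !inE leq_eqVlt (psi_ltE Ht) fr_trB_key ltnS.
case: eqP => // /val_inj E; case: (fr_trB (psi_inj Ht E)).
Qed.

Lemma psi_NF_pos d : crow d != 0 -> 0 < R d.
Proof.
case: (cell_cases d) => [[j ->]|[y ->]]; first by rewrite crow_fr.
move=> _; apply: leq_ltn_trans (leq0n (R (fr (T y)))) _.
by rewrite (psi_ltE Ht) fr_trB_key.
Qed.

Lemma psi_descent v : is_descent R v = [exists d, (crow d != 0) && (R d == v.+1 :> nat)].
Proof.
apply/idP/idP.
  case/existsP => c /existsP [d /and3P [_ H2 H3]]; apply/existsP; exists d.
  by rewrite H2 andbT -lt0n (leq_ltn_trans _ H3).
case/existsP => d /andP [Hd0 /eqP HRd].
have [c Hc] := inj_surj (psi_inj Ht) card_CL (predo (R d)).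
have HRc : (R c).+1 = R d by rewrite Hc /= prednK // psi_NF_pos.
apply/existsP; exists c; apply/existsP; exists d.
have Ecv : R c = v :> nat by move: HRd; rewrite -HRc => -[].
rewrite -Ecv eqxx HRc eqxx /=.
rewrite ltnNge; apply/negP => Hle.
case: (cell_cases d) Hd0 Hle HRc => [[j ->]|[y ->]]; first by rewrite crow_fr.
move=> _; case: (cell_cases c) => [[j ->]|[x ->]]; first by rewrite crow_fr.
rewrite !crow_trB ltnS => Hle HRc.
have Hk1 : keyT T (trB x) < keyT T (trB y) by rewrite -(psi_ltE Ht) -HRc.
move: Hk1; rewrite !keyT_trB => /(kenc_inv (trB_row_lt x) (trB_row_lt y)) [H|[_ H]]; last first.
  by move: H; rewrite ltnS ltnNge Hle.
have H1 : R (trB x) < R (fr (T y)).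
  by rewrite (psi_ltE Ht) keyT_trB keyT_fr; apply: kencL => //; exact: trB_row_lt.
have H2 : R (fr (T y)) < R (trB y) by rewrite (psi_ltE Ht) fr_trB_key.
by move: H2; rewrite -HRc ltnS leqNgt H1.
Qed.

Lemma predoR_inj : {in [set d : CL | crow d != 0] &, injective (fun d => predo (R d))}.
Proof.
move=> d1 d2; rewrite !inE => H1 H2 /(congr1 val) /= E.
apply: (psi_inj Ht); apply: val_inj.
have : (R d1).-1.+1 = (R d2).-1.+1 by rewrite E.
by rewrite !prednK ?psi_NF_pos.
Qed.

Lemma desc_set : [set v : 'I_N | is_descent R v] = [set predo (R d) | d in [set d : CL | crow d != 0]].
Proof.
apply/setP => v; rewrite inE psi_descent; apply/existsP/imsetP.
  case=> d /andP [H1 /eqP H2]; exists d; first by rewrite inE.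
  by apply: val_inj; rewrite /= H2.
case=> d; rewrite inE => H1 ->; exists d; rewrite H1 /= prednK //.
exact: psi_NF_pos.
Qed.

Lemma des_psi : des R = n.
Proof.
rewrite /des -cardsE desc_set card_in_imset; last exact: predoR_inj.
by rewrite cardsE card_NF.
Qed.

Lemma maj_psi : maj R = ('C(n.+1, 2) + \sum_(x : CB) T x)%N.
Proof.
rewrite /maj (eq_bigl (fun v => v \in [set v : 'I_N | is_descent R v])); last first.
  by move=> v; rewrite inE.
rewrite desc_set big_imset /=; last exact: predoR_inj.
rewrite (eq_bigr (fun d => nat_of_ord (R d))); last first.
  by move=> d; rewrite inE => H; rewrite /= prednK // psi_NF_pos.
rewrite big_mkcond sum_CL /= big1 ?add0n; last by move=> j _; rewrite inE crow_fr.
rewrite (eq_bigr (fun x => (T x).+1 + #|[set y in [set: CB] | keyT T (trB y) < keyT T (trB x)]|)); last first.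
  move=> x _; rewrite inE crow_trB /= psi_val /rank card_CL_pred.
  apply: f_equal2.
    rewrite -(card_ltn (ltn_ord (T x))); apply: eq_card => j.
    by rewrite /= 2!inE fr_trB_key ltnS.
  by apply: eq_card => y; rewrite /= !inE.
have SR := @sum_rank _ (fun y => keyT T (trB y)) (fun x y E => trB_inj (keyT_inj Ht E)) [set: CB].
rewrite cardsT card_CB in SR.
have SR' : \sum_(x : CB) #|[set y in [set: CB] | keyT T (trB y) < keyT T (trB x)]| = 'C(n, 2).
  by rewrite -SR; apply: eq_bigl => x; rewrite inE.
rewrite big_split /= SR' binS bin1.
have -> : \sum_(x : CB) (T x).+1 = (\sum_(x : CB) T x + n)%N.
  by rewrite -card_CB -sum1_card -big_split /=; apply: eq_bigr => x _; rewrite addn1.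
set s := (\sum_(x : CB) (T x : nat)). lia.
Qed.

End SSYT2.

End Main.

Lemma k0_case (beta : seq nat) : is_partition beta ->
  (nth 0 (conj_part beta) 0 <= 0) -> beta = [::].
Proof.
case/andP => Hs Hp; rewrite nth_conj // leqn0 => /eqP.
rewrite (eq_in_count (a2 := predT)) ?count_predT; first by case: beta {Hs Hp}.
by move=> x Hx; move/allP: Hp => /(_ x Hx).
Qed.

Local Open Scope ring_scope.

Theorem mainTheorem7 (beta : seq nat) (k : nat) :
  is_partition beta ->
  (nth 0%N (conj_part beta) 0 <= k)%N ->
  'X^('C(sumn beta + 1, 2)) *
    schur_eval (R := {poly int}) beta (fun j : 'I_k => 'X^j)
  = f_poly (k :: conj_part beta) (sumn beta).
Proof.
move=> Hp; case: k => [|k'] Hk.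
  have E := k0_case Hp Hk; subst beta.
  rewrite /schur_eval /f_poly /= expr0 mul1r.
  pose T0 : {ffun cells [::] -> 'I_0} := [ffun c => (val c).1].
  rewrite (big_pred1 T0); last first.
    move=> T; rewrite /=.
    have -> : T == T0 by apply/eqP/ffunP => c; case: (val c).1 => ? [].
    by rewrite /is_ssyt; apply/forallP => c; case: (val c).1 => ? [].
  rewrite big_pred0 => [|c]; last by case: (val c).1 => ? [].
  pose S0 : {ffun cells [:: 0%N] -> 'I_(sumn [:: 0%N])} := [ffun c => (val c).2].
  rewrite (big_pred1 S0); last first.
    move=> S; rewrite /=.
    have -> : S == S0 by apply/eqP/ffunP => c; case: (val c).2 => ? [].
    rewrite /des (eq_card (B := pred0)) ?card0 ?eqxx ?andbT; last by case.
    rewrite /is_syt; apply/andP; split; first by apply/injectiveP => c; case: (val c).2 => ? [].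
    by apply/forallP => c; case: (val c).2 => ? [].
  by rewrite /maj big_ord0 expr0.
rewrite /schur_eval /f_poly mulr_sumr.
rewrite (reindex_onto (psi Hp Hk) (phi Hp Hk)) /=; last first.
  by move=> S /andP [Hs /eqP Hd]; apply: psiphi.
apply: eq_big => T.
  apply/idP/idP.
    move=> Ht; rewrite psi_syt // des_psi // eqxx /=.
    by apply/eqP; apply: phipsi.
  case/andP => /andP [Hs /eqP Hd] /eqP E; rewrite -E; exact: phi_ssyt.
move=> Ht; rewrite prodrXr -exprD maj_psi // addn1; congr (_ ^+ (_ + _)).
Qed.
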